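(* Let $R\in\mathfrak{U}$ and $\mathfrak{U}'\subseteq\mathfrak{U}$, and suppose that either $\mathfrak{U}'=\mathfrak{U}$, or $R\in\mathfrak{C}_o$ and $\mathfrak{C}_o\subseteq\mathfrak{U}'\subseteq\mathfrak{U}$. Then for every $S\in\mathfrak{U}$, the following are equivalent: - $R\sqsubseteq_\Gamma S$ with respect to $\mathfrak{U}'$; - $\#\mathcal{S}_u(G,R)\le\#\mathcal{S}_u(G,S)$ for all $G\in\mathfrak{U}'$. Moreover, the latter condition implies $\#\mathcal{H}_u(G,R)\le\#\mathcal{H}_u(G,S)$ for all $G\in\mathfrak{U}'$.
   Context: **Undirected graphs.** - An undirected graph $G$ consists of a finite non-empty vertex set $V(G)$ and an edge set $E(G)$ of subsets of $V(G)$ of size 1 or 2. One-element edges are loops. - $G^*$ is $G$ with all loops removed. - $\mathfrak{U}$ is the class of undirected graphs. - A homomorphism $\zeta:G\to H$ is a map $V(G)\to V(H)$ with $\{\zeta(v),\zeta(w)\}\in E(H)$ for every $\{v,w\}\in E(G)$. $\mathcal{H}_u(G,H)$ is the set of homomorphisms. - $\mathcal{S}_u(G,H)=\mathcal{H}_u(G,H)\cap\mathcal{H}_u(G^*,H^* )$ is the set of strict homomorphisms, i.e. those mapping every two-element edge to a two-element edge. - $\mathfrak{C}_o=\{G\in\mathfrak{U}:G^*\text{ contains no cycle of odd length}\}$. **Connectivity.** - $v,w$ are adjacent if $v\neq w$ and $\{v,w\}\in E(G)$. - For $X\subseteq V(G)$ and $v,w\in X$, the vertices $v$ and $w$ are connected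 in $X$ if $v=w$, or if there are $z_0=v,\dots,z_I=w$ in $X$ with consecutive terms adjacent. - $\gamma_X(v)$ is the set of such $w$. - $\Gamma_\zeta(v)=\gamma_{\zeta^{-1}(\zeta(v))}(v)$. **Schemes.** - $\mathfrak{U}'_r$ is a fixed system of representatives of $\mathfrak{U}'$ up to isomorphism. - $R\sqsubseteq_\Gamma S$ with respect to $\mathfrak{U}'$ means there exist injective maps $\rho_G:\mathcal{H}_u(G,R)\to\mathcal{H}_u(G,S)$, $G\in\mathfrak{U}'_r$, with $\Gamma_{\rho_G(\zeta)}(v)=\Gamma_\zeta(v)$ for all $G$, $\zeta$ and $v$. *)

(* Defs.v *)
From mathcomp Require Import all_boot.
Unset Printing Implicit Defensive.

(* An undirected graph: finite non-empty vertex type, edges given by a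
   symmetric relation; [gE v v] means the loop {v} is an edge, and for
   v <> w, [gE v w] means the 2-element edge {v,w} is present. *)
Record ugraph := UGraph {
  gV : finType;
  gE : rel gV;
  gE_sym : symmetric gE;
  gV_nonempty : 0 < #|gV|
}.
Arguments gE : clear implicits.
Arguments gE_sym : clear implicits.
Arguments gV_nonempty : clear implicits.

Definition star_rel (G : ugraph) : rel (gV G) := fun v w => (v != w) && gE G v w.

Lemma star_sym (G : ugraph) : symmetric (star_rel G).
Proof. by move=> v w; rewrite /star_rel eq_sym (gE_sym G). Qed.

Definition gstar (G : ugraph) : ugraph := @UGraph (gV G) (star_rel G) (@star_sym G) (gV_nonempty G).

Definition is_hom (G H : ugraph) (f : {ffun gV G -> gV H}) : bool :=
  [forall v, forall w, gE G v w ==> gE H (f v) (f w)].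

Definition Hu (G H : ugraph) : {set {ffun gV G -> gV H}} := [set f | is_hom G H f].

Definition Su (G H : ugraph) : {set {ffun gV G -> gV H}} :=
  [set f | is_hom G H f && is_hom (gstar G) (gstar H) f].

Definition in_Co (G : ugraph) : Prop :=
  ~ exists s : seq (gV G),
      [&& 3 <= size s, odd (size s), uniq s & cycle (star_rel G) s].

Definition adj_in (G : ugraph) (X : {set gV G}) : rel (gV G) :=
  fun a b => [&& a \in X, b \in X & star_rel G a b].

Definition gammaX (G : ugraph) (X : {set gV G}) (v : gV G) : {set gV G} :=
  [set w | connect (adj_in G X) v w].

Definition GammaF (G H : ugraph) (z : {ffun gV G -> gV H}) (v : gV G) : {set gV G} :=
  gammaX G [set u | z u == z v] v.

Definition sqsubG (U' : ugraph -> Prop) (R S : ugraph) : Prop :=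
  forall G : ugraph, U' G ->
    exists rho : {ffun gV G -> gV R} -> {ffun gV G -> gV S},
      {in Hu G R &, injective rho} /\
      forall z, z \in Hu G R ->
        rho z \in Hu G S /\ forall v, GammaF G S (rho z) v = GammaF G R z v.

(* Main.v *)
Require Import Defs.
From mathcomp Require Import all_boot zify.

Lemma connect_ind_from (T : finType) (e : rel T) (v : T) (P : T -> Prop) :
  P v -> (forall a b, connect e v a -> e a b -> P a -> P b) ->
  forall w, connect e v w -> P w.
Proof.
move=> Pv step w /connectP [p]; elim/last_ind: p w => [|p x IH] w /=.
  by move=> _ ->.
rewrite rcons_path last_rcons => /andP[hp he] ->.
apply: (step (last v p)) => //; last exact: IH hp erefl.
by apply/connectP; exists p.
Qed.

Lemma connect_symm (T : finType) (e : rel T) : symmetric e ->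
  forall v w, connect e v w -> connect e w v.
Proof.
move=> hs v; apply: connect_ind_from => // a b _ hab hav.
by apply: connect_trans hav; apply: connect1; rewrite hs.
Qed.

Lemma adj_in_X (G : ugraph) X v w : connect (adj_in G X) v w -> v \in X -> w \in X.
Proof.
move=> h hv; move: w h; apply: connect_ind_from => // a b _.
by case/and3P.
Qed.

Lemma adj_in_sym (G : ugraph) X : symmetric (adj_in G X).
Proof.
move=> a b; rewrite /adj_in star_sym.
by case: (a \in X); case: (b \in X).
Qed.

Lemma homP (G H : ugraph) (f : {ffun gV G -> gV H}) v w :
  is_hom G H f -> gE G v w -> gE H (f v) (f w).
Proof. by move/forallP/(_ v)/forallP/(_ w)/implyP. Qed.
Arguments homP {G H f v w}.

Section Gam.
Variables (G H : ugraph) (z : {ffun gV G -> gV H}).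

Lemma G_refl v : v \in GammaF G H z v.
Proof. by rewrite /GammaF /gammaX inE connect0. Qed.

Lemma G_fiber v w : w \in GammaF G H z v -> z w = z v.
Proof.
rewrite /GammaF /gammaX inE => /adj_in_X.
by rewrite inE eqxx => /(_ isT); rewrite inE => /eqP.
Qed.

Lemma G_cls v w : w \in GammaF G H z v -> GammaF G H z w = GammaF G H z v.
Proof.
move=> hw; have hf := G_fiber _ _ hw.
move: hw; rewrite /GammaF /gammaX inE.
have -> : [set u | z u == z w] = [set u | z u == z v].
  by apply/setP => u; rewrite !inE hf.
move=> hvw; apply/setP => u; rewrite !inE; apply/idP/idP.
  exact: connect_trans.
by move=> hvu; apply: connect_trans hvu; apply: connect_symm hvw; apply: adj_in_sym.
Qed.

Lemma G_conn v w : w \in GammaF G H z v ->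
  connect (adj_in G (GammaF G H z v)) v w.
Proof.
rewrite {1}/GammaF /gammaX inE; move: w; apply: connect_ind_from => // a b hva hab hP.
apply: connect_trans hP _; apply: connect1.
move: (hab); rewrite /adj_in => /and3P[_ _ ->].
rewrite !andbT /GammaF /gammaX !inE hva /=.
by apply: connect_trans hva (connect1 hab).
Qed.

Lemma Su_sub : z \in Su G H -> z \in Hu G H.
Proof. by rewrite !inE => /andP[]. Qed.

Lemma Su_to_G v : z \in Su G H -> GammaF G H z v = [set v].
Proof.
rewrite inE => /andP[_ hs].
apply/setP => w; rewrite inE; apply/idP/idP; last by move/eqP->; exact: G_refl.
rewrite /GammaF /gammaX inE; move: w; apply: connect_ind_from => // a b _.
rewrite /adj_in !inE => /and3P[/eqP ha /eqP hb hst] /eqP hav.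
have := homP hs hst; rewrite /= /star_rel ha hb eqxx //.
Qed.

Lemma G_to_Su : z \in Hu G H -> (forall v, GammaF G H z v = [set v]) -> z \in Su G H.
Proof.
rewrite !inE => hz hG; rewrite hz /=.
apply/forallP => v; apply/forallP => w; apply/implyP.
rewrite /= /star_rel => /andP[hvw he].
rewrite (homP hz he) andbT; apply/negP => /eqP hzz.
have : w \in GammaF G H z v.
  rewrite /GammaF /gammaX inE; apply: connect1.
  by rewrite /adj_in !inE eqxx hzz eqxx /star_rel hvw he.
by rewrite hG inE => /eqP hwv; move: hvw; rewrite hwv eqxx.
Qed.

End Gam.
Arguments G_refl {G H z v}. Arguments G_fiber {G H z v w}. Arguments G_cls {G H z v w}.
Arguments G_conn {G H z v w}. Arguments Su_sub {G H z}. Arguments Su_to_G {G H z v}.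
Arguments G_to_Su {G H z}.
Section Quot.
Variable G : ugraph.
Variable gam : {ffun gV G -> {set gV G}}.
Hypothesis grefl : forall v, v \in gam v.
Hypothesis gcls : forall v w, w \in gam v -> gam w = gam v.

Definition rep (v : gV G) : gV G := odflt v [pick x in gam v].

Lemma pick_rep v : [pick x in gam v] = Some (rep v).
Proof.
rewrite /rep; case: pickP => [x _|H] //=.
by have := H v; rewrite /= grefl.
Qed.

Lemma rep_in v : rep v \in gam v.
Proof.
have := pick_rep v; case: pickP => [x hx [<-] //|H] //.
Qed.

Lemma rep_gam v : gam (rep v) = gam v.
Proof. exact: gcls (rep_in v). Qed.

Lemma rep_eq v w : gam v = gam w -> rep v = rep w.
Proof. by move=> h; have := pick_rep v; rewrite h pick_rep => -[]. Qed.

Lemma rep_idem v : rep (rep v) = rep v.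
Proof. exact: rep_eq (rep_gam v). Qed.

Lemma rep_gam_eq v w : rep v = rep w -> gam v = gam w.
Proof. by move=> h; rewrite -rep_gam h rep_gam. Qed.

Lemma rep_idemb v : rep (rep v) == rep v.
Proof. by rewrite rep_idem. Qed.

Definition QV : finType := {x : gV G | rep x == x}.

Definition toQ (v : gV G) : QV := exist _ (rep v) (rep_idemb v).

Lemma toQ_val (a : QV) : toQ (val a) = a.
Proof. by apply: val_inj; rewrite /= (eqP (valP a)). Qed.

Definition QE : rel QV := fun a b =>
  [exists x, exists y, [&& rep x == val a, rep y == val b & gE G x y]].

Lemma QE_sym : symmetric QE.
Proof.
have h : forall a b, QE a b -> QE b a.
  move=> a b /existsP[x /existsP[y /and3P[h1 h2 h3]]].
  by apply/existsP; exists y; apply/existsP; exists x; rewrite h1 h2 gE_sym h3.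
by move=> a b; apply/idP/idP; apply: h.
Qed.

Lemma QV_ne : 0 < #|QV|.
Proof.
by case/card_gt0P: (gV_nonempty G) => v _; apply/card_gt0P; exists (toQ v).
Qed.

Definition Q : ugraph := @UGraph QV QE QE_sym QV_ne.

Lemma QE_toQ v w : gE G v w -> QE (toQ v) (toQ w).
Proof. by move=> h; apply/existsP; exists v; apply/existsP; exists w; rewrite !eqxx h. Qed.

Definition key {H : ugraph} (z : {ffun gV G -> gV H}) : {ffun gV G -> {set gV G}} :=
  [ffun v => GammaF G H z v].

Definition resQ {H : ugraph} (z : {ffun gV G -> gV H}) : {ffun gV Q -> gV H} :=
  [ffun a : QV => z (val a)].

Definition extQ {H : ugraph} (f : {ffun gV Q -> gV H}) : {ffun gV G -> gV H} :=
  [ffun v => f (toQ v)].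

Variable H : ugraph.

Lemma keyP {z : {ffun gV G -> gV H}} : key z = gam -> forall v, GammaF G H z v = gam v.
Proof. by move=> h v; rewrite -h ffunE. Qed.

Lemma zrep {z : {ffun gV G -> gV H}} : key z = gam -> forall v, z (rep v) = z v.
Proof. by move=> h v; apply: G_fiber; rewrite (keyP h) rep_in. Qed.

Lemma A1 z : z \in Hu G H -> key z = gam -> resQ z \in Su Q H.
Proof.
move=> hz hk; have hz' : is_hom G H z by move: hz; rewrite inE.
rewrite inE; apply/andP; split; apply/forallP=> a; apply/forallP=> b; apply/implyP.
  case/existsP=> x /existsP [y /and3P[/eqP hx /eqP hy he]].
  by rewrite !ffunE -hx -hy !(zrep hk) (homP hz' he).
rewrite /= /star_rel => /andP[hab /existsP[x /existsP[y /and3P[/eqP hx /eqP hy he]]]].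
rewrite !ffunE -hx -hy !(zrep hk) (homP hz' he) andbT.
apply/negP => /eqP hxy.
have hxy' : x != y.
  by apply/negP => /eqP exy; move: hab; rewrite -(toQ_val a) -(toQ_val b) -hx -hy exy eqxx.
have : y \in GammaF G H z x.
  rewrite /GammaF /gammaX inE; apply: connect1.
  by rewrite /adj_in !inE eqxx hxy eqxx /star_rel hxy' he.
rewrite (keyP hk) => /gcls /rep_eq; rewrite hx hy => eab.
by move: hab; rewrite (_ : a = b) ?eqxx //; apply: val_inj.
Qed.

Lemma A2 : {in [set z in Hu G H | key z == gam] &, injective (@resQ H)}.
Proof.
move=> z1 z2; rewrite !inE => /andP[_ /eqP h1] /andP[_ /eqP h2] heq.
apply/ffunP => v; rewrite -(zrep h1) -(zrep h2).
by have := congr1 (fun f : {ffun gV Q -> gV H} => f (toQ v)) heq; rewrite !ffunE.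
Qed.

Lemma B1 f : f \in Su Q H -> extQ f \in Hu G H.
Proof.
rewrite !inE => /andP[hf _]; apply/forallP => v; apply/forallP => w; apply/implyP => he.
by rewrite !ffunE; apply: (homP hf); apply: QE_toQ.
Qed.

Hypothesis gconn : forall v w, w \in gam v -> connect (adj_in G (gam v)) v w.

Lemma B2 f : f \in Su Q H -> key (extQ f) = gam.
Proof.
rewrite inE => /andP[_ hs]; apply/ffunP => v; rewrite ffunE.
apply/setP => w; rewrite /GammaF /gammaX inE; apply/idP/idP.
  move=> hc; suff : gam w = gam v by move=> <-; exact: grefl.
  move: w hc; apply: connect_ind_from => // a b _.
  rewrite /adj_in !inE => /and3P[/eqP ha /eqP hb /andP[hab he]] hav.
  rewrite -hav; apply: rep_gam_eq.
  case: (eqVneq (toQ a) (toQ b)) => [e | ne]; first by have := congr1 val e.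
  have hq : star_rel Q (toQ a) (toQ b) by rewrite /star_rel ne /=; apply: QE_toQ.
  have := homP hs hq; rewrite /= /star_rel => /andP[].
  by move: ha hb; rewrite !ffunE => -> ->; rewrite eqxx.
move/gconn; move: w; apply: connect_ind_from => // a b _ hab hP.
apply: connect_trans hP (connect1 _).
move: hab; rewrite /adj_in !inE => /and3P[ha hb ->]; rewrite andbT !ffunE.
suff hq : forall u, u \in gam v -> toQ u = toQ v by rewrite (hq _ ha) (hq _ hb) eqxx.
move=> u hu; apply: val_inj => /=; apply: rep_eq; exact: gcls hu.
Qed.

Lemma B3 : {in Su Q H &, injective (@extQ H)}.
Proof.
move=> f1 f2 _ _ heq; apply/ffunP => a.
by have := congr1 (fun g : {ffun gV G -> gV H} => g (val a)) heq; rewrite !ffunE toQ_val.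
Qed.

Lemma card1 : #|[set z in Hu G H | key z == gam]| <= #|Su Q H|.
Proof.
rewrite -(card_in_imset A2); apply: subset_leq_card; apply/subsetP => _ /imsetP[z hz ->].
by move: hz; rewrite inE => /andP[hz /eqP hk]; apply: A1.
Qed.

Lemma card2 : #|Su Q H| <= #|[set z in Hu G H | key z == gam]|.
Proof.
rewrite -(card_in_imset B3); apply: subset_leq_card; apply/subsetP => _ /imsetP[f hf ->].
by rewrite inE B1 //= B2.
Qed.

End Quot.
Lemma odd_cycle (T : eqType) (e : rel T) (irr : forall x, ~~ e x x) :
  forall s, odd (size s) -> cycle e s ->
  exists s', [&& 3 <= size s', odd (size s'), uniq s' & cycle e s'].
Proof.
move=> s; have [n] := ubnP (size s); elim: n s => // n IHn s hsz hodd hc.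
case hu: (uniq s).
  exists s; rewrite hodd hu hc /= andbT.
  case: s hodd hc {hsz hu} => [|x [|y [|z t]]] //=.
  by rewrite andbT (negbTE (irr x)).
have [x0 _] : exists x0 : T, true by case: s hodd {hsz hc hu} => // x _ _; exists x.
move/negbT: hu => /(uniqPn x0) [i [j [hij hj heq]]].
have hct : cycle e (rot i s) by rewrite rot_cycle.
have hst : size (rot i s) = size s by rewrite size_rot.
have nth_t : forall k, k < size s - i -> nth x0 (rot i s) k = nth x0 s (i + k).
  move=> k hk; rewrite /rot nth_cat size_drop hk nth_drop //.
have h0 := nth_t 0 ltac:(lia). have h1 := nth_t (j - i) ltac:(lia).
rewrite addn0 in h0; rewrite (_ : i + (j - i) = j) in h1; last by lia.
move: hct hst h0 h1; case: (rot i s) => [|x t'] //=; first by lia.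
move=> hct hst h0 h1.
rewrite (_ : j - i = (j - i - 1).+1) /= in h1; last by lia.
set k := j - i - 1 in h1.
have hk : k < size t' by lia.
move: hct; rewrite -(cat_take_drop k t') (drop_nth x0 hk) h1 -heq -h0.
set a := take k t'; set b := drop k.+1 t' => hct.
have [hca hcb] : cycle e (x :: a) /\ cycle e (x :: b).
  move: hct; rewrite /= rcons_cat /= cat_path /= => /and3P[h1' h2' h3'].
  by rewrite /= rcons_path h1' h2' h3'.
have hsize : size (x :: a) + size (x :: b) = size s.
  rewrite -hst /= size_take hk size_drop; lia.
case ho: (odd (size (x :: a))).
  apply: (IHn (x :: a)) => //=; move: hsize => /= ?; lia.
apply: (IHn (x :: b)) => //; first by move: hsize => /= ?; lia.
by move: hodd; rewrite -hsize oddD ho.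
Qed.

Lemma inj_by_key (T U K : finType) (kT : T -> K) (kU : U -> K) (A : {set T}) (B : {set U}) (y0 : U) :
  (forall g, #|[set x in A | kT x == g]| <= #|[set y in B | kU y == g]|) ->
  exists rho : T -> U, {in A &, injective rho} /\
    forall x, x \in A -> rho x \in B /\ kU (rho x) = kT x.
Proof.
move=> hc.
pose AT g := enum [set x in A | kT x == g].
pose BU g := enum [set y in B | kU y == g].
pose rho x := nth y0 (BU (kT x)) (index x (AT (kT x))).
have hin : forall x, x \in A -> index x (AT (kT x)) < size (BU (kT x)).
  move=> x hx; apply: leq_trans (_ : size (AT (kT x)) <= _).
    by rewrite index_mem mem_enum inE hx eqxx.
  by rewrite -!cardE hc.
have hB : forall x, x \in A -> rho x \in [set y in B | kU y == kT x].
  by move=> x hx; rewrite -mem_enum mem_nth // hin.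
exists rho; split.
  move=> x1 x2 h1 h2 heq.
  have hk : kT x1 = kT x2.
    move: (hB x1 h1) (hB x2 h2); rewrite !inE heq => /andP[_ /eqP <-] /andP[_ /eqP].
    done.
  move: heq; rewrite /rho hk => /eqP; rewrite nth_uniq ?enum_uniq //; last 2 first.
  - by rewrite -hk hin.
  - exact: hin.
  move=> /eqP hi.
  have m1 : x1 \in AT (kT x2) by rewrite mem_enum inE h1 hk eqxx.
  have m2 : x2 \in AT (kT x2) by rewrite mem_enum inE h2 eqxx.
  by rewrite -(nth_index x1 m1) hi nth_index.
move=> x hx; have := hB x hx; rewrite inE => /andP[-> /eqP ->]; done.
Qed.

Lemma Co_transfer (G H : ugraph) f : f \in Su G H -> in_Co H -> in_Co G.
Proof.
rewrite inE => /andP[_ hs] coH [s /and4P[h3 hodd hu hc]]; apply: coH.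
have hm : cycle (star_rel H) (map f s).
  have hf : {homo f : a b / star_rel G a b >-> star_rel H a b}.
    by move=> a b; apply: (homP hs).
  exact: (homo_cycle hf _ hc).
have irr : forall x, ~~ star_rel H x x by move=> x; rewrite /star_rel eqxx.
have ho : odd (size (map f s)) by rewrite size_map.
have [s' hs'] := @odd_cycle _ _ irr _ ho hm.
by exists s'.
Qed.

Lemma count_le (R S : ugraph) (U' : ugraph -> Prop)
  (hU : (forall G, U' G) \/ (in_Co R /\ (forall G, in_Co G -> U' G)))
  (hc : forall G, U' G -> #|Su G R| <= #|Su G S|) (G : ugraph)
  (g : {ffun gV G -> {set gV G}}) :
  #|[set z in Hu G R | @key G R z == g]| <= #|[set z in Hu G S | @key G S z == g]|.
Proof.
case: (set_0Vmem [set z in Hu G R | @key G R z == g]) => [-> | [z0 hz0]].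
  by rewrite cards0.
move: hz0; rewrite inE => /andP[hz0 /eqP hk].
have hg : forall v, g v = GammaF G R z0 v by move=> v; rewrite -hk ffunE.
have grefl : forall v, v \in g v by move=> v; rewrite hg G_refl.
have gcls : forall v w, w \in g v -> g w = g v by move=> v w; rewrite !hg => /G_cls.
have gconn : forall v w, w \in g v -> connect (adj_in G (g v)) v w.
  by move=> v w; rewrite !hg; apply: G_conn.
have UQ : U' (@Q _ _ grefl gcls).
  case: hU => [hall|[coR hCo]]; first exact: hall.
  apply: hCo; exact: (@Co_transfer _ _ _ (@A1 _ _ grefl gcls _ z0 hz0 hk) coR).
apply: leq_trans (@card1 _ _ grefl gcls R) _.
apply: leq_trans (hc _ UQ) _.
exact: (@card2 _ _ grefl gcls S gconn).
Qed.

Theorem theorem4 (R : ugraph) (U' : ugraph -> Prop)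
  (hU : (forall G, U' G) \/ (in_Co R /\ (forall G, in_Co G -> U' G))) :
  forall S : ugraph,
    (sqsubG U' R S <-> (forall G, U' G -> #|Su G R| <= #|Su G S|)) /\
    ((forall G, U' G -> #|Su G R| <= #|Su G S|) ->
       forall G, U' G -> #|Hu G R| <= #|Hu G S|).
Proof.
move=> S.
have dir2 : (forall G, U' G -> #|Su G R| <= #|Su G S|) -> sqsubG U' R S.
  move=> hc G UG.
  case/card_gt0P: (gV_nonempty S) => s0 _.
  have [rho [hinj hp]] := @inj_by_key _ _ _ (@key G R) (@key G S) (Hu G R) (Hu G S)
    [ffun _ => s0] (@count_le R S U' hU hc G).
  exists rho; split => // z hz; have [hb hk] := hp z hz; split => // v.
  by have := congr1 (fun f : {ffun gV G -> {set gV G}} => f v) hk; rewrite !ffunE.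
split; last first.
  move=> hc G UG; have [rho [hinj hp]] := dir2 hc G UG.
  rewrite -(card_in_imset hinj); apply: subset_leq_card; apply/subsetP => _ /imsetP[z hz ->].
  by case: (hp z hz).
split => // hsq G UG; have [rho [hinj hp]] := hsq G UG.
have hinj' : {in Su G R &, injective rho} by move=> x y hx hy; apply: hinj; apply: Su_sub.
rewrite -(card_in_imset hinj'); apply: subset_leq_card; apply/subsetP => _ /imsetP[z hz ->].
have [hb hG] := hp z (Su_sub hz).
apply: G_to_Su => // v; rewrite hG; exact: Su_to_G.
Qed.
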